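(* Let $\nu:\mathcal{C}\to\mathbb{Z}$ and $\psi:\mathcal{C}\to\mathbb{R}$ be additive functions (group homomorphisms). If $\nu(\mathcal{K})=1$, then for all $\mathcal{K}'\in[\mathcal{K}]$, $\psi(\mathcal{K}')=\nu(\mathcal{K}')\,\psi(\mathcal{K})$.
   Context: $\mathcal{C}$ is the smooth knot concordance group. Let $\mathcal{C}^\circ=\mathcal{C}\setminus\{0\}$; $\mathcal{K}\sim'\mathcal{J}$ if there exist $\mathcal{M}\in\mathcal{C}$ and $r,s\in\mathbb{Z}$ with $\mathcal{K}=r\mathcal{M}$, $\mathcal{J}=s\mathcal{M}$; $\sim$ is the equivalence relation generated by $\sim'$; $[\mathcal{K}]$ denotes the $\sim$-class of $\mathcal{K}$ in $\mathbb{P}(\mathcal{C})=\mathcal{C}^\circ/\sim$. *)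

(* Defs.v *)
(* The smooth knot concordance group is modelled as an
   arbitrary abelian group (zmodType) C. *)
From HB Require Import structures.
From mathcomp Require Import all_boot all_order all_algebra.
From mathcomp Require Import reals.
From Stdlib Require Import Relations.
Set Implicit Arguments. Unset Strict Implicit. Unset Printing Implicit Defensive.
Import Order.TTheory GRing.Theory Num.Theory.
Local Open Scope ring_scope.

Definition sim' (C : zmodType) (K J : C) : Prop :=
  exists (M : C) (r s : int), K = M *~ r /\ J = M *~ s.

Definition nonzeroC (C : zmodType) := {x : C | x != 0}.

Definition sim'_nz (C : zmodType) : relation (nonzeroC C) :=
  fun a b => sim' (proj1_sig a) (proj1_sig b).

Definition sim (C : zmodType) (K J : C) : Prop :=
  exists (hK : K != 0) (hJ : J != 0),
    clos_refl_sym_trans (nonzeroC C) (@sim'_nz C)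
      (exist _ K hK) (exist _ J hJ).

(* the class [K] in P(C) = C°/~, as a predicate on C *)
Definition sim_class (C : zmodType) (K : C) : C -> Prop := fun K' => sim K K'.

(* Main.v *)
Require Import Defs.
From HB Require Import structures.
From mathcomp Require Import all_boot all_order all_algebra.
From mathcomp Require Import reals.
From Stdlib Require Import Relations.
Import Order.TTheory GRing.Theory Num.Theory.
Local Open Scope ring_scope.

Lemma key (C : zmodType) (R : realType) (nu : {additive C -> int}) x n :
 (nu (x *~ n))%:~R = (n%:~R * (nu x)%:~R : R).
Proof. rewrite raddfMz -intrM; congr intmul. by rewrite -mulrzl intz. Qed.

Lemma keyp (C : zmodType) (R : realType) (psi : {additive C -> R}) x n :
 psi (x *~ n) = n%:~R * psi x.
Proof. by rewrite raddfMz mulrzl. Qed.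

Lemma step (C : zmodType) (R : realType)
  (nu : {additive C -> int}) (psi : {additive C -> R}) (K J J' : C) :
  J != 0 -> sim' J J' ->
  psi J = (nu J)%:~R * psi K -> psi J' = (nu J')%:~R * psi K.
Proof.
move=> nz [M [r [s [EJ EJ']]]]; subst J J'.
have r0 : r != 0 by apply/eqP => r0; move: nz; rewrite r0 mulr0z eqxx.
rewrite !key !keyp => H.
have rR : (r%:~R : R) != 0 by rewrite intr_eq0.
rewrite -mulrA in H. have H2 := mulfI rR H. by rewrite H2 mulrA.
Qed.

Lemma sim'_sym (C : zmodType) (J J' : C) : sim' J J' -> sim' J' J.
Proof. by move=> [M [r [s [E1 E2]]]]; exists M, s, r. Qed.

Theorem theorem7p1 (C : zmodType) (R : realType)
  (nu : {additive C -> int}) (psi : {additive C -> R}) (K : C) :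
  nu K = 1 ->
  forall K' : C, sim_class K K' -> psi K' = (nu K')%:~R * psi K.
Proof.
move=> hK K' [hK0 [hK' Hc]].
pose P (a : nonzeroC C) := psi (proj1_sig a) = (nu (proj1_sig a))%:~R * psi K.
have PK : P (exist _ K hK0) by rewrite /P /= hK mul1r.
suff : forall a b, clos_refl_sym_trans _ (@sim'_nz C) a b -> (P a <-> P b).
  by move=> /(_ _ _ Hc) [+ _]; apply.
move=> a b; elim=> {a b} [a b Hab|a|a b _ [I1 I2]|a b c _ [I1 I2] _ [I3 I4]].
- case: a b Hab => [x hx] [y hy] /= Hab; rewrite /sim'_nz /= in Hab; rewrite /P /=; split.
    exact: (@step _ _ nu psi K x y hx Hab).
  exact: (@step _ _ nu psi K y x hy (@sim'_sym _ _ _ Hab)).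
- by [].
- by split.
- by split=> h; [apply: I3; apply: I1|apply: I2; apply: I4].
Qed.
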